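(* Let $n\ge 1$ and let $G$ be a bipartite multigraph consisting of $n$ matchings $M_1,\dots,M_n$ (not necessarily edge-disjoint), each with at least $2n$ edges. Then $G$ contains a rainbow matching with $n$ edges.
   Context: Each matching $M_i$ is a colour class (colour $i$); if the same pair of vertices is an edge of several $M_i$, these are treated as distinct parallel edges of different colours. A matching is rainbow if it contains at most one edge of each colour. *)

(* Defs.v *)
From mathcomp Require Import all_boot.
Set Implicit Arguments. Unset Strict Implicit. Unset Printing Implicit Defensive.

Definition is_matching (U V : finType) (M : {set U * V}) : Prop :=
  forall e f, e \in M -> f \in M -> e != f -> (e.1 != f.1) /\ (e.2 != f.2).

(* A rainbow matching with n edges in the multigraph formed by colour classes
   M_0, ..., M_{n-1}: one edge from each colour (so exactly one per colour,
   parallel edges of distinct colours being distinct), pairwise vertex-disjoint. *)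
Definition has_rainbow_matching_n (U V : finType) (n : nat)
    (M : 'I_n -> {set U * V}) : Prop :=
  exists f : 'I_n -> U * V,
    (forall i, f i \in M i) /\
    (forall i j, i != j -> ((f i).1 != (f j).1) /\ ((f i).2 != (f j).2)).

(* Main.v *)
Require Import Defs.
From mathcomp Require Import all_boot.

Lemma card_bigcup_le (T : finType) k (A : 'I_k -> {set T}) :
  (forall i, #|A i| <= 2) -> #|\bigcup_(i < k) A i| <= 2 * k.
Proof.
elim: k A => [|k IH] A HA; first by rewrite big_ord0 cards0.
rewrite big_ord_recr /=.
apply: leq_trans (leq_card_setU _ _) _.
rewrite mulnS addnC leq_add //.
exact: IH.
Qed.

Lemma card_side_le1 (U V : finType) (M : {set U * V}) (P : U * V -> bool) :
  is_matching M -> (forall e f, P e -> P f -> (e.1 == f.1) || (e.2 == f.2)) ->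
  #|[set e in M | P e]| <= 1.
Proof.
move=> Hm HP; apply/card_le1_eqP=> e f; rewrite !inE => /andP[eM Pe] /andP[fM Pf].
apply/eqP; apply/negPn/negP=> ne.
have [h1 h2] := Hm e f eM fM (ltac:(by rewrite eq_sym)).
by move: (HP e f Pe Pf); rewrite (negbTE h1) (negbTE h2).
Qed.

Theorem mainTheorem2 (U V : finType) (n : nat) (M : 'I_n -> {set U * V}) :
  1 <= n ->
  (forall i, is_matching (M i)) ->
  (forall i, 2 * n <= #|M i|) ->
  has_rainbow_matching_n M.
Proof.
move=> H1 Hm Hc.
have [x0 _] : exists x0 : U * V, x0 \in M (Ordinal H1).
  apply/set0Pn; rewrite -card_gt0; apply: leq_trans (Hc _).
  by rewrite muln_gt0 H1.
have key : forall k, k <= n -> exists f : 'I_n -> U * V,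
  (forall i : 'I_n, i < k -> f i \in M i) /\
  (forall i j : 'I_n, i < k -> j < k -> i != j ->
     ((f i).1 != (f j).1) /\ ((f i).2 != (f j).2)).
  elim=> [|k IH] Hk.
    by exists (fun _ => x0); split.
  have [f [fM fD]] := IH (ltnW Hk).
  pose c := Ordinal Hk.
  pose bad := \bigcup_(i < k)
     ([set e in M c | e.1 == (f (widen_ord (ltnW Hk) i)).1] :|:
      [set e in M c | e.2 == (f (widen_ord (ltnW Hk) i)).2]).
  have cb : #|bad| <= 2 * k.
    apply: card_bigcup_le => i.
    apply: leq_trans (leq_card_setU _ _) _.
    rewrite -[2]/(1+1); apply: leq_add; apply: card_side_le1 => // e g /eqP-> /eqP->;
      by rewrite eqxx ?orbT.
  have : ~~ (M c \subset bad).
    apply/negP=> /subset_leq_card sb.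
    have := leq_trans (Hc c) (leq_trans sb cb).
    by rewrite leq_pmul2l // leqNgt Hk.
  case/subsetPn=> x xM xnb.
  have nb : forall i : 'I_n, i < k -> (x.1 != (f i).1) /\ (x.2 != (f i).2).
    move=> i ik.
    have wi : widen_ord (ltnW Hk) (Ordinal ik) = i by apply: val_inj.
    split; apply/negP=> E; apply: (negP xnb); apply/bigcupP; exists (Ordinal ik) => //;
      by rewrite wi !inE xM E ?orbT.
  have lk : forall i : 'I_n, i < k.+1 -> i != c -> i < k.
    move=> i ik ne; move: ik; rewrite ltnS leq_eqVlt => /orP[/eqP E|//].
    have ic : i = c by apply: val_inj.
    by move: ne; rewrite ic eqxx.
  exists (fun i => if i == c then x else f i); split.
    move=> i ik; case: eqP => [->//|/eqP ne]; apply: fM; exact: lk.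
  move=> i j ik jk ij.
  case: (eqVneq i c) => [ic|ic]; case: (eqVneq j c) => [jc|jc].
  - by move: ij; rewrite ic jc eqxx.
  - exact: nb j (lk j jk jc).
  - have [a b] := nb i (lk i ik ic);
    by rewrite eq_sym a eq_sym b.
  - exact: fD (lk i ik ic) (lk j jk jc) ij.
have [f [fM fD]] := key n (leqnn n).
by exists f; split=> [i|i j]; [apply: fM | apply: fD].
Qed.
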